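(* Assume (A1). Let $E=\mu\sigma(1-2b^2\beta)$. If $$\begin{aligned} &2b^2\beta-1<0,\\ &(2-E)(1+c+2\gamma)-\omega^2dhE>0,\\ &1-c+cE+\omega^2dhE+\gamma c-E\gamma-E\gamma c+E^2\gamma-E^2\gamma^2+E\gamma^2-\gamma>0,\\ &2\gamma+c-cE-\gamma E-\omega^2dhE<3, \end{aligned}$$ then the steady state $S^*$ of $G$ is locally asymptotically stable.
   Context: Let $g_I,g_P:\mathbb{R}\to\mathbb{R}$ be continuously differentiable functions, each satisfying: $g(0)=0$ and $g$ strictly increasing; $g$ convex on $(-\infty,0]$ and concave on $[0,+\infty)$, with maximal slope attained at $0$ and $g'(0)=1$; $g$ bounded above and below. Parameters: $A>0$, $c\in(0,1)$, $\gamma>0$, $\omega\in[0,1]$, $h>0$, $d>0$, $\sigma>0$, $\mu>0$, $F^*>0$, $b>0$, $\beta>0$. Let $G=(G_1,G_2,G_3):\mathbb{R}^3\to\mathbb{R}^3$ be defined by $G_1(Y,P,Z)=A+cY+\gamma g_I(Y-Z)+\omega hP$, $G_2(Y,P,Z)=P+\sigma g_P\big(\mu\big((1-\omega)F^*+\omega dY-P+b(2\alpha(Y,P)-1)\big)\big)$, $G_3(Y,P,Z)=Y$, where $\alpha(Y,P)=\dfrac{1}{1+e^{-4b\beta(P-(1-\omega)F^*-\omega dY)}}$, and consider the system $(Y_{t+1},P_{t+1},Z_{t+1})=G(Y_t,P_t,Z_t)$. Assumption (A1): $1-c-hd>0$. $S^*=(Y^*,P^*,Y^* )$ is the fixed point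 with $Y^*=\frac{A+\omega(1-\omega)hF^*}{1-c-\omega^2dh}$, $P^*=\frac{(1-\omega)(1-c)F^*+\omega dA}{1-c-\omega^2dh}$. *)

(* Defs.v *)
From Stdlib Require Import Reals Lra.
Open Scope R_scope.

Definition convex_on_nonpos (g : R -> R) : Prop :=
  forall x y t, x <= 0 -> y <= 0 -> 0 <= t <= 1 ->
    g (t * x + (1 - t) * y) <= t * g x + (1 - t) * g y.

Definition concave_on_nonneg (g : R -> R) : Prop :=
  forall x y t, 0 <= x -> 0 <= y -> 0 <= t <= 1 ->
    t * g x + (1 - t) * g y <= g (t * x + (1 - t) * y).

Definition admissible_g (g : R -> R) : Prop :=
  (exists g' : R -> R,
      (forall x, derivable_pt_lim g x (g' x)) /\ continuity g' /\
      g' 0 = 1 /\ (forall x, g' x <= g' 0)) /\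
  g 0 = 0 /\
  (forall x y, x < y -> g x < g y) /\
  convex_on_nonpos g /\ concave_on_nonneg g /\
  (exists m M, forall x, m <= g x <= M).

Definition alpha (b beta omega d Fs Y P : R) : R :=
  / (1 + exp (- (4 * b * beta * (P - (1 - omega) * Fs - omega * d * Y)))).

Definition G (gI gP : R -> R) (A c gamma omega h d sigma mu Fs b beta : R)
  (s : R * R * R) : R * R * R :=
  let '(Y, P, Z) := s in
  (A + c * Y + gamma * gI (Y - Z) + omega * h * P,
   P + sigma * gP (mu * ((1 - omega) * Fs + omega * d * Y - P
                         + b * (2 * alpha b beta omega d Fs Y P - 1))),
   Y).

Definition Ystar (A c omega h d Fs : R) : R :=
  (A + omega * (1 - omega) * h * Fs) / (1 - c - omega ^ 2 * d * h).

Definition Pstar (A c omega h d Fs : R) : R :=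
  ((1 - omega) * (1 - c) * Fs + omega * d * A) / (1 - c - omega ^ 2 * d * h).

Definition Sstar (A c omega h d Fs : R) : R * R * R :=
  (Ystar A c omega h d Fs, Pstar A c omega h d Fs, Ystar A c omega h d Fs).

Definition dist3 (u v : R * R * R) : R :=
  let '(x1, x2, x3) := u in let '(y1, y2, y3) := v in
  sqrt ((x1 - y1) ^ 2 + (x2 - y2) ^ 2 + (x3 - y3) ^ 2).

Definition locally_asymptotically_stable (F : R * R * R -> R * R * R) (s : R * R * R) : Prop :=
  (forall eps, 0 < eps -> exists delta, 0 < delta /\
     forall x, dist3 x s < delta -> forall n : nat, dist3 (Nat.iter n F x) s < eps) /\
  (exists eta, 0 < eta /\
     forall x, dist3 x s < eta -> Un_cv (fun n => dist3 (Nat.iter n F x) s) 0).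

(* Main.v *)
Require Import Defs.
From Stdlib Require Import Reals Lra Psatz.
From Coquelicot Require Import Coquelicot.
Open Scope R_scope.

Lemma sq_split u v th : 0 < th -> (u+v)^2 <= (1+th)*u^2 + (1+/th)*v^2.
Proof.
  intros Hth.
  assert (E: (1+th)*u^2 + (1+/th)*v^2 - (u+v)^2 = th*(u - v/th)^2) by (field; lra).
  assert (0 <= th*(u - v/th)^2) by (apply Rmult_le_pos; [lra| apply pow2_ge_0]).
  lra.
Qed.

Definition W3 (A1 A2 A3 p q r y0 y1 y2 : R) :=
  A1*(y0+p*y1+q*y2)^2 + A2*(y1+r*y2)^2 + A3*y2^2.

Lemma W3_split A1 A2 A3 p q r y0 y1 y2 z0 z1 z2 th :
  0 <= A1 -> 0 <= A2 -> 0 <= A3 -> 0 < th ->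
  W3 A1 A2 A3 p q r (y0+z0) (y1+z1) (y2+z2) <=
  (1+th) * W3 A1 A2 A3 p q r y0 y1 y2 + (1+/th) * W3 A1 A2 A3 p q r z0 z1 z2.
Proof.
  intros H1 H2 H3 Hth. unfold W3.
  pose proof (sq_split (y0+p*y1+q*y2) (z0+p*z1+q*z2) th Hth) as S1.
  pose proof (sq_split (y1+r*y2) (z1+r*z2) th Hth) as S2.
  pose proof (sq_split y2 z2 th Hth) as S3.
  replace (y0 + z0 + p * (y1 + z1) + q * (y2 + z2)) with ((y0+p*y1+q*y2) + (z0+p*z1+q*z2)) by ring.
  replace (y1 + z1 + r * (y2 + z2)) with ((y1+r*y2) + (z1+r*z2)) by ring.
  apply Rmult_le_compat_l with (r:=A1) in S1; auto.
  apply Rmult_le_compat_l with (r:=A2) in S2; auto.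
  apply Rmult_le_compat_l with (r:=A3) in S3; auto.
  lra.
Qed.

Lemma wcs3 A1 A2 A3 c1 c2 c3 X1 X2 X3 : 0 < A1 -> 0 < A2 -> 0 < A3 ->
  (c1*X1+c2*X2+c3*X3)^2 <= (c1^2/A1+c2^2/A2+c3^2/A3)*(A1*X1^2+A2*X2^2+A3*X3^2).
Proof.
  intros H1 H2 H3.
  assert (E: (c1^2/A1+c2^2/A2+c3^2/A3)*(A1*X1^2+A2*X2^2+A3*X3^2) - (c1*X1+c2*X2+c3*X3)^2
     = (c1*A2*X2 - c2*A1*X1)^2/(A1*A2) + (c1*A3*X3 - c3*A1*X1)^2/(A1*A3)
       + (c2*A3*X3 - c3*A2*X2)^2/(A2*A3)) by (field; lra).
  assert (0 <= (c1*A2*X2 - c2*A1*X1)^2/(A1*A2)) by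
    (apply Rmult_le_pos; [apply pow2_ge_0 | left; apply Rinv_0_lt_compat; nra]).
  assert (0 <= (c1*A3*X3 - c3*A1*X1)^2/(A1*A3)) by
    (apply Rmult_le_pos; [apply pow2_ge_0 | left; apply Rinv_0_lt_compat; nra]).
  assert (0 <= (c2*A3*X3 - c3*A2*X2)^2/(A2*A3)) by
    (apply Rmult_le_pos; [apply pow2_ge_0 | left; apply Rinv_0_lt_compat; nra]).
  lra.
Qed.

Lemma W3_lower A1 A2 A3 p q r : 0 < A1 -> 0 < A2 -> 0 < A3 ->
  exists k, 0 < k /\ forall y0 y1 y2, k * y0^2 <= W3 A1 A2 A3 p q r y0 y1 y2.
Proof.
  intros H1 H2 H3.
  set (C := 1^2/A1 + (-p)^2/A2 + (p*r-q)^2/A3).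
  assert (HC: 0 < C).
  { unfold C. assert (0 < 1^2/A1) by (unfold Rdiv; apply Rmult_lt_0_compat; [lra| apply Rinv_0_lt_compat; lra]).
    assert (0 <= (-p)^2/A2) by (apply Rmult_le_pos; [apply pow2_ge_0 | left; apply Rinv_0_lt_compat; lra]).
    assert (0 <= (p*r-q)^2/A3) by (apply Rmult_le_pos; [apply pow2_ge_0 | left; apply Rinv_0_lt_compat; lra]).
    lra. }
  exists (/C). split; [apply Rinv_0_lt_compat; lra|].
  intros y0 y1 y2.
  pose proof (wcs3 A1 A2 A3 1 (-p) (p*r-q) (y0+p*y1+q*y2) (y1+r*y2) y2 H1 H2 H3) as W.
  replace (1 * (y0 + p * y1 + q * y2) + - p * (y1 + r * y2) + (p * r - q) * y2) with y0 in W by ring.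
  fold C in W. unfold W3.
  apply Rmult_le_reg_l with C; [lra|].
  rewrite <- Rmult_assoc, Rinv_r by lra. lra.
Qed.

Lemma cs3 a0 a1 a2 y0 y1 y2 : (a0*y0+a1*y1+a2*y2)^2 <= (a0^2+a1^2+a2^2)*(y0^2+y1^2+y2^2).
Proof.
  assert (E: (a0^2+a1^2+a2^2)*(y0^2+y1^2+y2^2) - (a0*y0+a1*y1+a2*y2)^2 =
    (a0*y1-a1*y0)^2 + (a0*y2-a2*y0)^2 + (a1*y2-a2*y1)^2) by ring.
  pose proof (pow2_ge_0 (a0*y1-a1*y0)). pose proof (pow2_ge_0 (a0*y2-a2*y0)).
  pose proof (pow2_ge_0 (a1*y2-a2*y1)). lra.
Qed.

Lemma W3_upper A1 A2 A3 p q r : 0 <= A1 -> 0 <= A2 -> 0 <= A3 ->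
  exists M, 0 <= M /\ forall y0 y1 y2, W3 A1 A2 A3 p q r y0 y1 y2 <= M * (y0^2+y1^2+y2^2).
Proof.
  intros H1 H2 H3.
  exists (A1*(1^2+p^2+q^2) + A2*(0^2+1^2+r^2) + A3*(0^2+0^2+1^2)).
  split.
  { pose proof (pow2_ge_0 p). pose proof (pow2_ge_0 q). pose proof (pow2_ge_0 r).
    assert (0 <= A1*(1^2+p^2+q^2)) by (apply Rmult_le_pos; nra).
    assert (0 <= A2*(0^2+1^2+r^2)) by (apply Rmult_le_pos; nra).
    assert (0 <= A3*(0^2+0^2+1^2)) by (apply Rmult_le_pos; nra). lra. }
  intros y0 y1 y2. unfold W3.
  pose proof (cs3 1 p q y0 y1 y2) as C1.
  pose proof (cs3 0 1 r y0 y1 y2) as C2.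
  pose proof (cs3 0 0 1 y0 y1 y2) as C3.
  replace (1*y0+p*y1+q*y2) with (y0+p*y1+q*y2) in C1 by ring.
  replace (0*y0+1*y1+r*y2) with (y1+r*y2) in C2 by ring.
  replace (0*y0+0*y1+1*y2) with y2 in C3 by ring.
  apply Rmult_le_compat_l with (r:=A1) in C1; auto.
  apply Rmult_le_compat_l with (r:=A2) in C2; auto.
  apply Rmult_le_compat_l with (r:=A3) in C3; auto.
  lra.
Qed.

Lemma W3_nonneg A1 A2 A3 p q r y0 y1 y2 : 0 <= A1 -> 0 <= A2 -> 0 <= A3 ->
  0 <= W3 A1 A2 A3 p q r y0 y1 y2.
Proof.
  intros. unfold W3.
  pose proof (pow2_ge_0 (y0+p*y1+q*y2)). pose proof (pow2_ge_0 (y1+r*y2)). pose proof (pow2_ge_0 y2).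
  assert (0 <= A1*(y0+p*y1+q*y2)^2) by (apply Rmult_le_pos; auto).
  assert (0 <= A2*(y1+r*y2)^2) by (apply Rmult_le_pos; auto).
  assert (0 <= A3*y2^2) by (apply Rmult_le_pos; auto). lra.
Qed.

Definition mm (a0 a1 a2:R) := 1 - a0^2.
Definition ss (a0 a1 a2:R) := a2 - a0*a1.
Definition tt (a0 a1 a2:R) := a1 - a0*a2.
Definition HA1 a0 a1 a2 := mm a0 a1 a2.
Definition HA2 a0 a1 a2 := (mm a0 a1 a2^2 - tt a0 a1 a2^2)/mm a0 a1 a2.
Definition HA3 a0 a1 a2 := (mm a0 a1 a2 - tt a0 a1 a2)*((mm a0 a1 a2 + tt a0 a1 a2)^2 - ss a0 a1 a2^2)
   / (mm a0 a1 a2 * (mm a0 a1 a2 + tt a0 a1 a2)).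
Definition Hp a0 a1 a2 := ss a0 a1 a2 / mm a0 a1 a2.
Definition Hqq a0 a1 a2 := tt a0 a1 a2 / mm a0 a1 a2.
Definition Hr a0 a1 a2 := ss a0 a1 a2 / (mm a0 a1 a2 + tt a0 a1 a2).
Definition Hq a0 a1 a2 z0 z1 z2 :=
  W3 (HA1 a0 a1 a2) (HA2 a0 a1 a2) (HA3 a0 a1 a2) (Hp a0 a1 a2) (Hqq a0 a1 a2) (Hr a0 a1 a2) z0 z1 z2.

Lemma Hq_id a0 a1 a2 z0 z1 z2 :
  mm a0 a1 a2 <> 0 -> mm a0 a1 a2 + tt a0 a1 a2 <> 0 ->
  Hq a0 a1 a2 z0 z1 z2 - Hq a0 a1 a2 z1 z2 (-(a0*z0+a1*z1+a2*z2)) =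
  (z0 + a2*z1 + a1*z2 + a0*(-(a0*z0+a1*z1+a2*z2)))^2.
Proof.
  unfold Hq, W3, HA1, HA2, HA3, Hp, Hqq, Hr, mm, ss, tt. intros. field. split; assumption.
Qed.

Lemma Hq_hom a0 a1 a2 k w0 w1 w2 : Hq a0 a1 a2 (k*w0) (k*w1) (k*w2) = k^2 * Hq a0 a1 a2 w0 w1 w2.
Proof. unfold Hq, W3. ring. Qed.

Definition PosC a0 a1 a2 :=
  0 < mm a0 a1 a2 /\ 0 < mm a0 a1 a2 - tt a0 a1 a2 /\ 0 < mm a0 a1 a2 + tt a0 a1 a2 /\
  0 < mm a0 a1 a2 + tt a0 a1 a2 - ss a0 a1 a2 /\ 0 < mm a0 a1 a2 + tt a0 a1 a2 + ss a0 a1 a2.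

Lemma PosC_coef a0 a1 a2 : PosC a0 a1 a2 ->
  0 < HA1 a0 a1 a2 /\ 0 < HA2 a0 a1 a2 /\ 0 < HA3 a0 a1 a2.
Proof.
  unfold PosC, HA1, HA2, HA3. set (m := mm a0 a1 a2); set (t := tt a0 a1 a2); set (s := ss a0 a1 a2).
  intros [H1 [H2 [H3 [H4 H5]]]]. repeat split.
  - exact H1.
  - unfold Rdiv. apply Rmult_lt_0_compat; [nra| apply Rinv_0_lt_compat; lra].
  - unfold Rdiv. apply Rmult_lt_0_compat; [apply Rmult_lt_0_compat; nra|].
    apply Rinv_0_lt_compat; nra.
Qed.

Definition Wr rho a0 a1 a2 y0 y1 y2 :=
  Hq (rho^3*a0) (rho^2*a1) (rho*a2) y0 (rho*y1) (rho^2*y2).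

Lemma Wr_W3 rho a0 a1 a2 y0 y1 y2 :
  Wr rho a0 a1 a2 y0 y1 y2 =
  W3 (HA1 (rho^3*a0) (rho^2*a1) (rho*a2)) (HA2 (rho^3*a0) (rho^2*a1) (rho*a2) * rho^2)
     (HA3 (rho^3*a0) (rho^2*a1) (rho*a2) * rho^4)
     (Hp (rho^3*a0) (rho^2*a1) (rho*a2) * rho) (Hqq (rho^3*a0) (rho^2*a1) (rho*a2) * rho^2)
     (Hr (rho^3*a0) (rho^2*a1) (rho*a2) * rho) y0 y1 y2.
Proof. unfold Wr, Hq, W3. ring. Qed.

Lemma Wr_dec rho a0 a1 a2 y0 y1 y2 : 0 < rho -> PosC (rho^3*a0) (rho^2*a1) (rho*a2) ->
  rho^2 * Wr rho a0 a1 a2 y1 y2 (-(a0*y0+a1*y1+a2*y2)) <= Wr rho a0 a1 a2 y0 y1 y2.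
Proof.
  intros Hr HP. destruct HP as [H1 [H2 [H3 _]]].
  pose proof (Hq_id (rho^3*a0) (rho^2*a1) (rho*a2) y0 (rho*y1) (rho^2*y2)) as E.
  assert (E2: Hq (rho^3*a0) (rho^2*a1) (rho*a2) (rho*y1) (rho^2*y2)
       (-(rho^3*a0*y0 + rho^2*a1*(rho*y1) + rho*a2*(rho^2*y2)))
     = rho^2 * Wr rho a0 a1 a2 y1 y2 (-(a0*y0+a1*y1+a2*y2))).
  { unfold Wr. rewrite <- Hq_hom.
    replace (rho*(rho*y2)) with (rho^2*y2) by ring.
    replace (rho * (rho ^ 2 * - (a0 * y0 + a1 * y1 + a2 * y2))) with
      (-(rho^3*a0*y0 + rho^2*a1*(rho*y1) + rho*a2*(rho^2*y2))) by ring. reflexivity. }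
  rewrite E2 in E.
  assert (E3: Wr rho a0 a1 a2 y0 y1 y2 = Hq (rho^3*a0) (rho^2*a1) (rho*a2) y0 (rho*y1) (rho^2*y2)) by reflexivity.
  rewrite E3.
  pose proof (pow2_ge_0 (y0 + rho * a2 * (rho * y1) + rho ^ 2 * a1 * (rho ^ 2 * y2) +
       rho ^ 3 * a0 * - (rho ^ 3 * a0 * y0 + rho ^ 2 * a1 * (rho * y1) + rho * a2 * (rho ^ 2 * y2)))).
  assert (Hm: mm (rho^3*a0) (rho^2*a1) (rho*a2) <> 0) by lra.
  assert (Ht: mm (rho^3*a0) (rho^2*a1) (rho*a2) + tt (rho^3*a0) (rho^2*a1) (rho*a2) <> 0) by lra.
  specialize (E Hm Ht). lra.
Qed.

Lemma cont_pos f : continuity_pt f 1 -> 0 < f 1 ->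
  exists d, 0 < d /\ forall r, Rabs (r-1) < d -> 0 < f r.
Proof.
  intros Hc Hf.
  destruct (Hc (f 1 / 2)) as [d [Hd Hx]]; [lra|].
  exists d. split; auto. intros r Hr.
  destruct (Req_dec r 1) as [->|Hne]; auto.
  assert (Hdist: R_dist (f r) (f 1) < f 1 / 2).
  { apply Hx. split; [split; [exact I| auto]| exact Hr]. }
  unfold R_dist in Hdist. apply Rabs_def2 in Hdist. lra.
Qed.

Lemma rho_exists a0 a1 a2 : PosC a0 a1 a2 ->
  exists rho, 1 < rho /\ PosC (rho^3*a0) (rho^2*a1) (rho*a2).
Proof.
  intros [H1 [H2 [H3 [H4 H5]]]].
  unfold mm, ss, tt in *.
  destruct (cont_pos (fun r => 1 - (r^3*a0)^2)) as [d1 [Hd1 P1]];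
    [reg | simpl; lra |].
  destruct (cont_pos (fun r => 1 - (r^3*a0)^2 - (r^2*a1 - r^3*a0*(r*a2)))) as [d2 [Hd2 P2]];
    [reg | simpl; lra |].
  destruct (cont_pos (fun r => 1 - (r^3*a0)^2 + (r^2*a1 - r^3*a0*(r*a2)))) as [d3 [Hd3 P3]];
    [reg | simpl; lra |].
  destruct (cont_pos (fun r => 1 - (r^3*a0)^2 + (r^2*a1 - r^3*a0*(r*a2)) - (r*a2 - r^3*a0*(r^2*a1)))) as [d4 [Hd4 P4]];
    [reg | simpl; lra |].
  destruct (cont_pos (fun r => 1 - (r^3*a0)^2 + (r^2*a1 - r^3*a0*(r*a2)) + (r*a2 - r^3*a0*(r^2*a1)))) as [d5 [Hd5 P5]];
    [reg | simpl; lra |].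
  set (d := Rmin d1 (Rmin d2 (Rmin d3 (Rmin d4 d5)))).
  assert (Hd: 0 < d) by (unfold d; repeat apply Rmin_pos; auto).
  assert (Hdd: d <= d1 /\ d <= d2 /\ d <= d3 /\ d <= d4 /\ d <= d5).
  { unfold d. pose proof (Rmin_l d1 (Rmin d2 (Rmin d3 (Rmin d4 d5)))).
    pose proof (Rmin_r d1 (Rmin d2 (Rmin d3 (Rmin d4 d5)))).
    pose proof (Rmin_l d2 (Rmin d3 (Rmin d4 d5))). pose proof (Rmin_r d2 (Rmin d3 (Rmin d4 d5))).
    pose proof (Rmin_l d3 (Rmin d4 d5)). pose proof (Rmin_r d3 (Rmin d4 d5)).
    pose proof (Rmin_l d4 d5). pose proof (Rmin_r d4 d5). lra. }
  exists (1 + d/2). split; [lra|].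
  assert (Hr: Rabs (1 + d/2 - 1) < d) by (rewrite Rabs_right; lra).
  unfold PosC, mm, ss, tt.
  repeat split.
  - apply P1. lra.
  - apply P2. lra.
  - apply P3. lra.
  - apply P4. lra.
  - apply P5. lra.
Qed.

Definition J3 (j11 j12 j13 j21 j22 : R) (x : R*R*R) : R*R*R :=
  let '(x1,x2,x3) := x in (j11*x1+j12*x2+j13*x3, j21*x1+j22*x2, x1).
Definition nrm (x:R*R*R) := let '(x1,x2,x3) := x in x1^2+x2^2+x3^2.
Definition add3 (x y : R*R*R) : R*R*R :=
  let '(x1,x2,x3) := x in let '(y1,y2,y3) := y in (x1+y1,x2+y2,x3+y3).
Definition VV (Wf : R->R->R->R) (Jf : R*R*R -> R*R*R) (x : R*R*R) :=
  let '(x1,x2,x3) := x in let '(y1,y2,y3) := Jf x in let '(z1,z2,z3) := Jf (Jf x) in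
  Wf x1 y1 z1 + Wf x2 y2 z2 + Wf x3 y3 z3.

Lemma nrm_nonneg x : 0 <= nrm x.
Proof. destruct x as [[x1 x2] x3]; simpl. pose proof (pow2_ge_0 x1). pose proof (pow2_ge_0 x2). pose proof (pow2_ge_0 x3). lra. Qed.

Lemma VV_split Wf j11 j12 j13 j21 j22 x y th :
  (forall y0 y1 y2 z0 z1 z2 w0 w1 w2 th, w0 = y0+z0 -> w1 = y1+z1 -> w2 = y2+z2 -> 0 < th ->
     Wf w0 w1 w2 <= (1+th)*Wf y0 y1 y2 + (1+/th)*Wf z0 z1 z2) -> 0 < th ->
  VV Wf (J3 j11 j12 j13 j21 j22) (add3 x y) <=
  (1+th)*VV Wf (J3 j11 j12 j13 j21 j22) x + (1+/th)*VV Wf (J3 j11 j12 j13 j21 j22) y.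
Proof.
  intros HW Hth. destruct x as [[x1 x2] x3]; destruct y as [[y1 y2] y3]. simpl.
  match goal with |- Wf ?a1 ?b1 ?c1 + Wf ?a2 ?b2 ?c2 + Wf ?a3 ?b3 ?c3 <=
     (1+th)*(Wf ?p1 ?q1 ?r1 + Wf ?p2 ?q2 ?r2 + Wf ?p3 ?q3 ?r3) +
     (1+/th)*(Wf ?s1 ?t1 ?u1 + Wf ?s2 ?t2 ?u2 + Wf ?s3 ?t3 ?u3) =>
    pose proof (HW p1 q1 r1 s1 t1 u1 a1 b1 c1 th ltac:(ring) ltac:(ring) ltac:(ring) Hth);
    pose proof (HW p2 q2 r2 s2 t2 u2 a2 b2 c2 th ltac:(ring) ltac:(ring) ltac:(ring) Hth);
    pose proof (HW p3 q3 r3 s3 t3 u3 a3 b3 c3 th ltac:(ring) ltac:(ring) ltac:(ring) Hth)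
  end.
  lra.
Qed.

Lemma VV_lower Wf Jf k x : (forall y0 y1 y2, k*y0^2 <= Wf y0 y1 y2) ->
  k * nrm x <= VV Wf Jf x.
Proof.
  intros HW. destruct x as [[x1 x2] x3]. unfold VV.
  destruct (Jf (Jf (x1,x2,x3))) as [[z1 z2] z3]. destruct (Jf (x1,x2,x3)) as [[y1 y2] y3].
  simpl. pose proof (HW x1 y1 z1). pose proof (HW x2 y2 z2). pose proof (HW x3 y3 z3). lra.
Qed.

Lemma J3_bound j11 j12 j13 j21 j22 x :
  nrm (J3 j11 j12 j13 j21 j22 x) <= (j11^2+j12^2+j13^2+j21^2+j22^2+1) * nrm x.
Proof.
  destruct x as [[x1 x2] x3]. simpl.
  pose proof (cs3 j11 j12 j13 x1 x2 x3). pose proof (cs3 j21 j22 0 x1 x2 x3).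
  replace (j21*x1+j22*x2+0*x3) with (j21*x1+j22*x2) in H0 by ring.
  pose proof (pow2_ge_0 x1). pose proof (pow2_ge_0 x2). pose proof (pow2_ge_0 x3).
  pose proof (pow2_ge_0 j11). pose proof (pow2_ge_0 j12). pose proof (pow2_ge_0 j13).
  pose proof (pow2_ge_0 j21). pose proof (pow2_ge_0 j22).
  assert (j21^2+j22^2+0^2 <= j21^2+j22^2) by lra.
  nra.
Qed.

Lemma VV_upper Wf j11 j12 j13 j21 j22 M : 0 <= M ->
  (forall y0 y1 y2, Wf y0 y1 y2 <= M*(y0^2+y1^2+y2^2)) ->
  exists Mv, 0 < Mv /\ forall x, VV Wf (J3 j11 j12 j13 j21 j22) x <= Mv * nrm x.
Proof.
  intros HM HW. set (NJ := j11^2+j12^2+j13^2+j21^2+j22^2+1).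
  assert (HNJ: 0 <= NJ).
  { unfold NJ. pose proof (pow2_ge_0 j11). pose proof (pow2_ge_0 j12). pose proof (pow2_ge_0 j13).
    pose proof (pow2_ge_0 j21). pose proof (pow2_ge_0 j22). lra. }
  exists (M*(1+NJ+NJ*NJ)+1). split.
  { assert (0 <= M*(1+NJ+NJ*NJ)) by (apply Rmult_le_pos; nra). lra. }
  intros x.
  pose proof (J3_bound j11 j12 j13 j21 j22 x) as B1. fold NJ in B1.
  pose proof (J3_bound j11 j12 j13 j21 j22 (J3 j11 j12 j13 j21 j22 x)) as B2. fold NJ in B2.
  assert (B3: nrm (J3 j11 j12 j13 j21 j22 (J3 j11 j12 j13 j21 j22 x)) <= NJ*NJ*nrm x).
  { eapply Rle_trans; [exact B2|]. rewrite Rmult_assoc. apply Rmult_le_compat_l; auto. }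
  assert (HV: VV Wf (J3 j11 j12 j13 j21 j22) x <=
     M*(nrm x + nrm (J3 j11 j12 j13 j21 j22 x) + nrm (J3 j11 j12 j13 j21 j22 (J3 j11 j12 j13 j21 j22 x)))).
  { unfold VV. destruct x as [[x1 x2] x3].
    destruct (J3 j11 j12 j13 j21 j22 (J3 j11 j12 j13 j21 j22 (x1,x2,x3))) as [[z1 z2] z3].
    destruct (J3 j11 j12 j13 j21 j22 (x1,x2,x3)) as [[y1 y2] y3].
    simpl. pose proof (HW x1 y1 z1). pose proof (HW x2 y2 z2). pose proof (HW x3 y3 z3). nra. }
  pose proof (nrm_nonneg x).
  assert (M*(nrm x + nrm (J3 j11 j12 j13 j21 j22 x) + nrm (J3 j11 j12 j13 j21 j22 (J3 j11 j12 j13 j21 j22 x)))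
     <= M*((1+NJ+NJ*NJ)*nrm x)) by (apply Rmult_le_compat_l; auto; nra).
  nra.
Qed.

Lemma VV_dec Wf j11 j12 j13 j21 j22 rho x :
  (forall y0 y1 y2 y3, y3 = -((j13*j22)*y0 + (j11*j22 - j12*j21 - j13)*y1 + (-(j11+j22))*y2) ->
     rho^2 * Wf y1 y2 y3 <= Wf y0 y1 y2) ->
  rho^2 * VV Wf (J3 j11 j12 j13 j21 j22) (J3 j11 j12 j13 j21 j22 x) <= VV Wf (J3 j11 j12 j13 j21 j22) x.
Proof.
  intros HW. destruct x as [[x1 x2] x3]. simpl.
  rewrite !Rmult_plus_distr_l.
  apply Rplus_le_compat; [apply Rplus_le_compat|]; apply HW; ring.
Qed.


Lemma deriv_small f l : derivable_pt_lim f 0 l -> f 0 = 0 ->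
  forall e, 0 < e -> exists dl, 0 < dl /\ forall v, Rabs v < dl -> Rabs (f v - l*v) <= e * Rabs v.
Proof.
  intros Hd Hf0 e He. destruct (Hd e He) as [dl Hdl].
  exists dl. split; [apply cond_pos|]. intros v Hv.
  destruct (Req_dec v 0) as [->|Hne].
  - rewrite Hf0. replace (0 - l*0) with 0 by ring. rewrite Rabs_R0. lra.
  - specialize (Hdl v Hne Hv). rewrite Rplus_0_l, Hf0 in Hdl.
    replace (f v - l*v) with (v * ((f v - 0)/v - l)) by (field; auto).
    rewrite Rabs_mult. rewrite Rmult_comm. apply Rmult_le_compat_r; [apply Rabs_pos| lra].
Qed.

Definition psi b beta mu (u : R) := mu*(-u + b*(2*/(1+exp(-(4*b*beta*u))) - 1)).

Lemma psi_der b beta mu : derivable_pt_lim (psi b beta mu) 0 (mu*(-1+2*b^2*beta)).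
Proof.
  apply is_derive_Reals. unfold psi.
  auto_derive.
  all: rewrite Rmult_0_r; rewrite Ropp_0; rewrite exp_0.
  all: lra.
Qed.

Lemma psi_0 b beta mu : psi b beta mu 0 = 0.
Proof. unfold psi. rewrite Rmult_0_r, Ropp_0, exp_0. field. Qed.

Lemma h2_der gP b beta mu sigma : admissible_g gP ->
  derivable_pt_lim (fun u => sigma * gP (psi b beta mu u)) 0 (- (mu*sigma*(1-2*b^2*beta))).
Proof.
  intros [[gP' [Hd [_ [H1 _]]]] _].
  pose proof (derivable_pt_lim_comp (psi b beta mu) gP 0 _ _ (psi_der b beta mu) (Hd _)) as C.
  rewrite psi_0, H1 in C.
  pose proof (derivable_pt_lim_scal _ sigma 0 _ C) as C2.
  replace (- (mu*sigma*(1-2*b^2*beta))) with (sigma * (1 * (mu*(-1+2*b^2*beta)))) by ring.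
  exact C2.
Qed.

Definition dev Ys Ps (p : R*R*R) : R*R*R := let '(Y,P,Z) := p in (Y - Ys, P - Ps, Z - Ys).

Definition Rm (gI h2 : R -> R) g E wd (x : R*R*R) : R*R*R :=
  let '(x1,x2,x3) := x in (g*(gI (x1-x3) - 1*(x1-x3)), h2 (x2 - wd*x1) - (-E)*(x2 - wd*x1), 0).

Lemma model gI gP A c gamma omega h d sigma mu Fs b beta p E :
  1 - c - omega^2*d*h <> 0 -> E = mu * sigma * (1 - 2 * b ^ 2 * beta) ->
  let Ys := Ystar A c omega h d Fs in let Ps := Pstar A c omega h d Fs in
  dev Ys Ps (G gI gP A c gamma omega h d sigma mu Fs b beta p) =
  add3 (J3 (c+gamma) (omega*h) (-gamma) (omega*d*E) (1-E) (dev Ys Ps p))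
       (Rm gI (fun u => sigma * gP (psi b beta mu u)) gamma E (omega*d) (dev Ys Ps p)).
Proof.
  intros HD HE Ys Ps. destruct p as [[Y P] Z].
  assert (F1: A = Ys - c*Ys - omega*h*Ps).
  { unfold Ys, Ps, Ystar, Pstar. field. auto. }
  assert (F2: P - (1-omega)*Fs - omega*d*Y = (P - Ps) - omega*d*(Y - Ys)).
  { assert (Ps - (1-omega)*Fs - omega*d*Ys = 0) by (unfold Ys, Ps, Ystar, Pstar; field; auto). lra. }
  unfold G, dev, J3, Rm, add3, alpha.
  replace (Y - Ys - (Z - Ys)) with (Y - Z) by ring.
  rewrite <- F2.
  unfold psi.
  replace (mu * ((1 - omega) * Fs + omega * d * Y - P +
     b * (2 * / (1 + exp (- (4 * b * beta * (P - (1 - omega) * Fs - omega * d * Y)))) - 1)))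
   with (mu * (- (P - (1 - omega) * Fs - omega * d * Y) +
     b * (2 * / (1 + exp (- (4 * b * beta * (P - (1 - omega) * Fs - omega * d * Y)))) - 1))) by ring.
  f_equal; [f_equal|].
  - rewrite F1. ring.
  - rewrite F2. rewrite HE. ring.
  - ring.
Qed.


Lemma pow_le_1 q n : 0 <= q <= 1 -> 0 <= q^n <= 1.
Proof.
  intros Hq. induction n as [|n IH]; simpl; [lra|].
  split; [apply Rmult_le_pos; lra| nra].
Qed.

Lemma sqrt_lt_sq x y : 0 <= x -> 0 < y -> sqrt x < y -> x < y^2.
Proof.
  intros Hx Hy H. apply sqrt_lt_0_alt. rewrite sqrt_pow2 by lra. exact H.
Qed.

Lemma lt_sq_sqrt x y : 0 <= x -> 0 < y -> x < y^2 -> sqrt x < y.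
Proof.
  intros Hx Hy H. rewrite <- (sqrt_pow2 y) by lra. apply sqrt_lt_1_alt. lra.
Qed.

Lemma abstract_las (F : R*R*R -> R*R*R) (s : R*R*R) (dv : R*R*R -> R*R*R) (V : R*R*R -> R)
  k Mv eta q :
  0 < k -> 0 < Mv -> 0 < eta -> 0 <= q < 1 ->
  (forall p, dist3 p s = sqrt (nrm (dv p))) ->
  (forall x, k * nrm x <= V x) -> (forall x, V x <= Mv * nrm x) ->
  (forall p, V (dv p) < eta -> V (dv (F p)) <= q * V (dv p)) ->
  locally_asymptotically_stable F s.
Proof.
  intros Hk HM He Hq Hd Hlow Hup Hstep.
  assert (Vnn: forall x, 0 <= V x).
  { intros x. pose proof (Hlow x). pose proof (nrm_nonneg x). nra. }
  assert (Hit: forall p, V (dv p) < eta -> forall n, V (dv (Nat.iter n F p)) <= q^n * V (dv p)).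
  { intros p Hp n. induction n as [|n IH].
    - simpl. lra.
    - change (Nat.iter (S n) F p) with (F (Nat.iter n F p)).
      pose proof (pow_le_1 q n ltac:(lra)).
      pose proof (Vnn (dv p)).
      assert (V (dv (Nat.iter n F p)) < eta) by nra.
      pose proof (Hstep _ H1). simpl. nra. }
  split.
  - intros eps Heps.
    set (m := Rmin eta (k*eps^2)).
    assert (Hm: 0 < m) by (unfold m; apply Rmin_pos; [lra| apply Rmult_lt_0_compat; [lra| apply pow_lt; lra]]).
    assert (Hm1: m <= eta) by apply Rmin_l. assert (Hm2: m <= k*eps^2) by apply Rmin_r.
    exists (sqrt (m/Mv)). split.
    { apply sqrt_lt_R0. unfold Rdiv. apply Rmult_lt_0_compat; [lra| apply Rinv_0_lt_compat; lra]. }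
    intros p Hp n. rewrite Hd in Hp |- *.
    pose proof (nrm_nonneg (dv p)) as N0.
    apply sqrt_lt_0_alt in Hp.
    assert (HV0: V (dv p) < m).
    { pose proof (Hup (dv p)). apply Rmult_lt_compat_l with (r:=Mv) in Hp; [|lra].
      replace (Mv * (m/Mv)) with m in Hp by (field; lra). lra. }
    pose proof (Hit p ltac:(lra) n) as Hn.
    pose proof (pow_le_1 q n ltac:(lra)).
    pose proof (Vnn (dv p)).
    pose proof (Hlow (dv (Nat.iter n F p))).
    apply lt_sq_sqrt; [apply nrm_nonneg| lra|].
    apply Rmult_lt_reg_l with k; [lra|]. nra.
  - exists (sqrt (eta/Mv)). split.
    { apply sqrt_lt_R0. unfold Rdiv. apply Rmult_lt_0_compat; [lra| apply Rinv_0_lt_compat; lra]. }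
    intros p Hp. rewrite Hd in Hp. apply sqrt_lt_0_alt in Hp.
    assert (HV0: V (dv p) < eta).
    { pose proof (Hup (dv p)). apply Rmult_lt_compat_l with (r:=Mv) in Hp; [|lra].
      replace (Mv * (eta/Mv)) with eta in Hp by (field; lra). lra. }
    pose proof (Vnn (dv p)) as V0.
    intros eps Heps.
    assert (Hy: 0 < k*eps^2/(V (dv p) + 1)).
    { unfold Rdiv. apply Rmult_lt_0_compat; [apply Rmult_lt_0_compat; [lra| apply pow_lt; lra]| apply Rinv_0_lt_compat; lra]. }
    assert (Hqa: Rabs q < 1) by (rewrite Rabs_right; lra).
    destruct (pow_lt_1_zero q Hqa _ Hy) as [N HN].
    exists N. intros n Hn. specialize (HN n Hn).
    rewrite Rabs_right in HN by (apply Rle_ge, pow_le; lra).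
    unfold R_dist. rewrite Rminus_0_r. rewrite Hd.
    rewrite Rabs_right by (apply Rle_ge, sqrt_pos).
    apply lt_sq_sqrt; [apply nrm_nonneg| lra|].
    pose proof (Hit p HV0 n) as Hn'.
    pose proof (Hlow (dv (Nat.iter n F p))).
    pose proof (pow_le_1 q n ltac:(lra)).
    assert (q^n * (V (dv p) + 1) < k*eps^2).
    { apply Rmult_lt_compat_r with (r := V (dv p) + 1) in HN; [|lra].
      replace (k * eps ^ 2 / (V (dv p) + 1) * (V (dv p) + 1)) with (k*eps^2) in HN by (field; lra). lra. }
    apply Rmult_lt_reg_l with k; [lra|]. nra.
Qed.


Lemma abs_lt_of_sq v dl : 0 < dl -> v^2 < dl^2 -> Rabs v < dl.
Proof.
  intros Hd H. destruct (Rlt_or_le (Rabs v) dl) as [h|h]; auto.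
  exfalso. pose proof (pow2_abs v). pose proof (Rabs_pos v). nra.
Qed.

Lemma sq_of_abs_le f e v : 0 <= e -> Rabs f <= e * Rabs v -> f^2 <= e^2 * v^2.
Proof.
  intros He H. rewrite <- (pow2_abs f), <- (pow2_abs v).
  pose proof (Rabs_pos f). pose proof (Rabs_pos v). nra.
Qed.

Lemma rem_small gI h2 g E wd :
  derivable_pt_lim gI 0 1 -> gI 0 = 0 -> derivable_pt_lim h2 0 (-E) -> h2 0 = 0 ->
  forall e, 0 < e -> exists eta, 0 < eta /\
    forall x, nrm x < eta -> nrm (Rm gI h2 g E wd x) <= e * nrm x.
Proof.
  intros HdI HI0 Hd2 H20 e He.
  set (C := 2*g^2 + 1 + wd^2).
  assert (HC: 1 <= C) by (unfold C; pose proof (pow2_ge_0 g); pose proof (pow2_ge_0 wd); lra).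
  set (e1 := Rmin 1 (e/C)).
  assert (He1: 0 < e1).
  { unfold e1. apply Rmin_pos; [lra|]. unfold Rdiv. apply Rmult_lt_0_compat; [lra| apply Rinv_0_lt_compat; lra]. }
  assert (He1a: e1 <= 1) by apply Rmin_l.
  assert (He1b: e1 <= e/C) by apply Rmin_r.
  assert (He1c: e1^2 * C <= e).
  { apply Rle_trans with (e1 * C); [apply Rmult_le_compat_r; [lra| nra]|].
    apply Rmult_le_compat_r with (r:=C) in He1b; [|lra].
    replace (e/C*C) with e in He1b by (field; lra). lra. }
  destruct (deriv_small gI 1 HdI HI0 e1 He1) as [d1 [Hd1 S1]].
  destruct (deriv_small h2 (-E) Hd2 H20 e1 He1) as [d2 [Hd2' S2]].
  set (eta := Rmin (d1^2/2) (d2^2/(1+wd^2))).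
  assert (Hw: 0 < 1 + wd^2) by (pose proof (pow2_ge_0 wd); lra).
  exists eta. split.
  { unfold eta. apply Rmin_pos; unfold Rdiv; apply Rmult_lt_0_compat;
      try (apply pow_lt; lra); apply Rinv_0_lt_compat; lra. }
  intros [[x1 x2] x3] Hx. cbn [nrm Rm] in Hx |- *.
  assert (Hx1: x1^2+x2^2+x3^2 < d1^2/2) by (apply Rlt_le_trans with eta; [exact Hx| apply Rmin_l]).
  assert (Hx2: x1^2+x2^2+x3^2 < d2^2/(1+wd^2)) by (apply Rlt_le_trans with eta; [exact Hx| apply Rmin_r]).
  assert (Hv: (x1-x3)^2 <= 2*(x1^2+x2^2+x3^2)).
  { assert (2*(x1^2+x2^2+x3^2) - (x1-x3)^2 = (x1+x3)^2 + 2*x2^2) by ring.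
    pose proof (pow2_ge_0 (x1+x3)); pose proof (pow2_ge_0 x2). lra. }
  assert (Hu: (x2 - wd*x1)^2 <= (1+wd^2)*(x1^2+x2^2+x3^2)).
  { pose proof (cs3 1 (-wd) 0 x2 x1 x3) as Hc.
    replace (1*x2 + -wd*x1 + 0*x3) with (x2 - wd*x1) in Hc by ring.
    replace (1^2 + (-wd)^2 + 0^2) with (1+wd^2) in Hc by ring.
    pose proof (pow2_ge_0 x3).
    apply Rle_trans with (1 := Hc). apply Rmult_le_compat_l; lra. }
  assert (Av: Rabs (x1-x3) < d1).
  { apply abs_lt_of_sq; auto. nra. }
  assert (Au: Rabs (x2 - wd*x1) < d2).
  { apply abs_lt_of_sq; auto.
    apply Rmult_lt_compat_l with (r:=1+wd^2) in Hx2; [|lra].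
    replace ((1+wd^2)*(d2^2/(1+wd^2))) with (d2^2) in Hx2 by (field; lra). lra. }
  pose proof (S1 _ Av) as T1. apply sq_of_abs_le in T1; [|lra].
  pose proof (S2 _ Au) as T2. apply sq_of_abs_le in T2; [|lra].
  pose proof (pow2_ge_0 g).
  assert (E1: (g*(gI (x1-x3) - 1*(x1-x3)))^2 = g^2 * (gI (x1-x3) - 1*(x1-x3))^2) by ring.
  rewrite E1.
  assert (g^2 * (gI (x1-x3) - 1*(x1-x3))^2 <= g^2 * (e1^2 * (2*(x1^2+x2^2+x3^2)))).
  { apply Rmult_le_compat_l; auto. apply Rle_trans with (e1^2 * (x1-x3)^2); auto.
    apply Rmult_le_compat_l; [apply pow2_ge_0| auto]. }
  assert ((h2 (x2 - wd*x1) - (-E)*(x2 - wd*x1))^2 <= e1^2 * ((1+wd^2)*(x1^2+x2^2+x3^2))).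
  { apply Rle_trans with (e1^2 * (x2 - wd*x1)^2); auto.
    apply Rmult_le_compat_l; [apply pow2_ge_0| auto]. }
  assert (HN: 0 <= x1^2+x2^2+x3^2) by (pose proof (pow2_ge_0 x1); pose proof (pow2_ge_0 x2); pose proof (pow2_ge_0 x3); lra).
  assert (e1^2 * C * (x1^2+x2^2+x3^2) <= e * (x1^2+x2^2+x3^2)) by (apply Rmult_le_compat_r; auto).
  unfold C in *. 
  replace (0^2) with 0 by ring. nra.
Qed.


Lemma Wr_props rho a0 a1 a2 : 0 < rho -> PosC (rho^3*a0) (rho^2*a1) (rho*a2) ->
  (forall y0 y1 y2 z0 z1 z2 w0 w1 w2 th, w0 = y0+z0 -> w1 = y1+z1 -> w2 = y2+z2 -> 0 < th ->
     Wr rho a0 a1 a2 w0 w1 w2 <= (1+th)*Wr rho a0 a1 a2 y0 y1 y2 + (1+/th)*Wr rho a0 a1 a2 z0 z1 z2) /\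
  (exists k, 0 < k /\ forall y0 y1 y2, k*y0^2 <= Wr rho a0 a1 a2 y0 y1 y2) /\
  (exists M, 0 <= M /\ forall y0 y1 y2, Wr rho a0 a1 a2 y0 y1 y2 <= M*(y0^2+y1^2+y2^2)).
Proof.
  intros Hrho0 HP. pose proof (PosC_coef _ _ _ HP) as [C1 [C2 C3]].
  assert (C2': 0 < HA2 (rho^3*a0) (rho^2*a1) (rho*a2) * rho^2) by (apply Rmult_lt_0_compat; [lra| apply pow_lt; lra]).
  assert (C3': 0 < HA3 (rho^3*a0) (rho^2*a1) (rho*a2) * rho^4) by (apply Rmult_lt_0_compat; [lra| apply pow_lt; lra]).
  split; [|split].
  - intros y0 y1 y2 z0 z1 z2 w0 w1 w2 th -> -> -> Hth.
    rewrite !Wr_W3. apply W3_split; lra.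
  - destruct (W3_lower _ _ _ (Hp (rho^3*a0) (rho^2*a1) (rho*a2) * rho)
       (Hqq (rho^3*a0) (rho^2*a1) (rho*a2) * rho^2) (Hr (rho^3*a0) (rho^2*a1) (rho*a2) * rho) C1 C2' C3') as [k [Hk Hk2]].
    exists k. split; auto. intros. rewrite Wr_W3. apply Hk2.
  - destruct (W3_upper (HA1 (rho^3*a0) (rho^2*a1) (rho*a2)) (HA2 (rho^3*a0) (rho^2*a1) (rho*a2) * rho^2)
       (HA3 (rho^3*a0) (rho^2*a1) (rho*a2) * rho^4) (Hp (rho^3*a0) (rho^2*a1) (rho*a2) * rho)
       (Hqq (rho^3*a0) (rho^2*a1) (rho*a2) * rho^2) (Hr (rho^3*a0) (rho^2*a1) (rho*a2) * rho)
       ltac:(lra) ltac:(lra) ltac:(lra)) as [M [HM HM2]].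
    exists M. split; auto. intros. rewrite Wr_W3. apply HM2.
Qed.

Lemma jury_a0 a0 a1 a2 : 1+a2+a1+a0 > 0 -> 1-a2+a1-a0 > 0 -> 1 - a0^2 - a1 + a0*a2 > 0 -> a1 < 3 -> -1 < a0 < 1.
Proof.
  intros H1 H2 H3 H4. split.
  - destruct (Rlt_or_le (-1) a0) as [h|h]; [exact h|exfalso].
    assert (a0*a2 <= a0*(-1-a1-a0)) by (apply Rmult_le_compat_neg_l; lra).
    nra.
  - destruct (Rlt_or_le a0 1) as [h|h]; [exact h|exfalso].
    assert (a0*a2 <= a0*(1+a1-a0)) by (apply Rmult_le_compat_l; lra).
    nra.
Qed.
Lemma jury_mt a0 a1 a2 : 1+a2+a1+a0 > 0 -> 1-a2+a1-a0 > 0 -> -1 < a0 < 1 -> 1 - a0^2 + a1 - a0*a2 > 0.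
Proof.
  intros H1 H2 [H3 H4].
  destruct (Rle_or_lt 0 a0) as [h|h].
  - assert (a0*a2 <= a0*(1+a1-a0)) by (apply Rmult_le_compat_l; lra). nra.
  - assert (a0*a2 <= a0*(-1-a1-a0)) by (apply Rmult_le_compat_neg_l; lra). nra.
Qed.

Lemma dist3_dev Ys Ps p : dist3 p (Ys, Ps, Ys) = sqrt (nrm (dev Ys Ps p)).
Proof. destruct p as [[Y P] Z]. reflexivity. Qed.

Theorem proposition4
  (gI gP : R -> R) (A c gamma omega h d sigma mu Fs b beta : R)
  (HgI : admissible_g gI) (HgP : admissible_g gP)
  (HA : 0 < A) (Hc : 0 < c < 1) (Hgamma : 0 < gamma) (Homega : 0 <= omega <= 1)
  (Hh : 0 < h) (Hd : 0 < d) (Hsigma : 0 < sigma) (Hmu : 0 < mu) (HFs : 0 < Fs)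
  (Hb : 0 < b) (Hbeta : 0 < beta)
  (HA1 : 1 - c - h * d > 0) :
  let E := mu * sigma * (1 - 2 * b ^ 2 * beta) in
  2 * b ^ 2 * beta - 1 < 0 ->
  (2 - E) * (1 + c + 2 * gamma) - omega ^ 2 * d * h * E > 0 ->
  1 - c + c * E + omega ^ 2 * d * h * E + gamma * c - E * gamma - E * gamma * c
    + E ^ 2 * gamma - E ^ 2 * gamma ^ 2 + E * gamma ^ 2 - gamma > 0 ->
  2 * gamma + c - c * E - gamma * E - omega ^ 2 * d * h * E < 3 ->
  locally_asymptotically_stable
    (G gI gP A c gamma omega h d sigma mu Fs b beta)
    (Sstar A c omega h d Fs).
Proof.
  intros E. assert (HEdef: E = mu * sigma * (1 - 2 * b ^ 2 * beta)) by reflexivity.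
  clearbody E. intros J1 J2 J3c J4.
  assert (HE: 0 < E) by (rewrite HEdef; apply Rmult_lt_0_compat; [apply Rmult_lt_0_compat|]; lra).
  set (K := omega^2*d*h) in *.
  assert (HK0: 0 <= K) by (unfold K; apply Rmult_le_pos; [apply Rmult_le_pos|]; nra).
  assert (HK1: K <= h*d).
  { unfold K. assert (omega^2 <= 1) by nra. assert (0 < d*h) by nra. nra. }
  assert (HD: 1 - c - omega^2*d*h <> 0) by (fold K; lra).
  set (j11 := c+gamma). set (j12 := omega*h). set (j13 := -gamma).
  set (j21 := omega*d*E). set (j22 := 1-E).
  set (a0 := j13*j22). set (a1 := j11*j22 - j12*j21 - j13). set (a2 := -(j11+j22)).
  assert (P1: 1+a2+a1+a0 = E*(1-c-K)) by (unfold a0,a1,a2,j11,j12,j13,j21,j22,K; ring).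
  assert (Pm: 1-a2+a1-a0 = (2 - E) * (1 + c + 2 * gamma) - K * E) by (unfold a0,a1,a2,j11,j12,j13,j21,j22,K; ring).
  assert (Dd: 1 - a0^2 - a1 + a0*a2 = 1 - c + c * E + K * E + gamma * c - E * gamma - E * gamma * c
    + E ^ 2 * gamma - E ^ 2 * gamma ^ 2 + E * gamma ^ 2 - gamma) by (unfold a0,a1,a2,j11,j12,j13,j21,j22,K; ring).
  assert (A13: a1 = 2 * gamma + c - c * E - gamma * E - K * E) by (unfold a0,a1,a2,j11,j12,j13,j21,j22,K; ring).
  assert (HP1: 1+a2+a1+a0 > 0) by (rewrite P1; apply Rmult_lt_0_compat; lra).
  assert (HPm: 1-a2+a1-a0 > 0) by (rewrite Pm; lra).
  assert (HDd: 1 - a0^2 - a1 + a0*a2 > 0) by (rewrite Dd; lra).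
  assert (Ha1: a1 < 3) by (rewrite A13; lra).
  pose proof (jury_a0 a0 a1 a2 HP1 HPm HDd Ha1) as Ha0.
  pose proof (jury_mt a0 a1 a2 HP1 HPm Ha0) as Hmt.
  assert (HPC: PosC a0 a1 a2).
  { unfold PosC, mm, ss, tt. repeat split.
    - nra.
    - lra.
    - lra.
    - replace (1 - a0 ^ 2 + (a1 - a0 * a2) - (a2 - a0 * a1)) with ((1+a0)*(1-a2+a1-a0)) by ring.
      apply Rmult_lt_0_compat; lra.
    - replace (1 - a0 ^ 2 + (a1 - a0 * a2) + (a2 - a0 * a1)) with ((1-a0)*(1+a2+a1+a0)) by ring.
      apply Rmult_lt_0_compat; lra. }
  destruct (rho_exists a0 a1 a2 HPC) as [rho [Hrho HPr]].
  destruct (Wr_props rho a0 a1 a2 ltac:(lra) HPr) as [Wsplit [[kw [Hkw Wlow]] [Mw [HMw Wup]]]].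
  set (Wf := Wr rho a0 a1 a2).
  set (Jf := J3 j11 j12 j13 j21 j22).
  set (V := VV Wf Jf).
  assert (Vlow: forall x, kw * nrm x <= V x) by (intros; apply VV_lower; exact Wlow).
  destruct (VV_upper Wf j11 j12 j13 j21 j22 Mw HMw Wup) as [Mv [HMv Vup]].
  assert (Vdec: forall x, rho^2 * V (Jf x) <= V x).
  { intros x. apply VV_dec. intros y0 y1 y2 y3 Hy3. rewrite Hy3. apply Wr_dec; [lra|exact HPr]. }
  assert (Vsplit: forall x y th, 0 < th -> V (add3 x y) <= (1+th)*V x + (1+/th)*V y).
  { intros x y th Hth. apply VV_split; auto. }
  set (th := (rho^2-1)/2).
  assert (Hr2: 1 < rho^2) by nra.
  assert (Hth: 0 < th) by (unfold th; lra).
  set (k1 := (1+th)/rho^2).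
  assert (Hk1: k1 < 1) by (unfold k1, th; apply Rmult_lt_reg_r with (rho^2); [lra|]; field_simplify; lra).
  assert (Hk1p: 0 < k1) by (unfold k1; apply Rmult_lt_0_compat; [lra| apply Rinv_0_lt_compat; lra]).
  assert (Hith: 0 < 1 + /th) by (pose proof (Rinv_0_lt_compat th Hth); lra).
  set (eps := (1-k1)*kw/(2*(1+/th)*Mv)).
  assert (Heps: 0 < eps).
  { unfold eps. apply Rmult_lt_0_compat; [apply Rmult_lt_0_compat; lra|].
    apply Rinv_0_lt_compat. apply Rmult_lt_0_compat; [lra|auto]. }
  destruct HgI as [[gI' [HdI [_ [HI1 _]]]] [HI0 _]].
  assert (HdI0: derivable_pt_lim gI 0 1) by (rewrite <- HI1; apply HdI).
  pose proof (h2_der gP b beta mu sigma HgP) as Hd2. rewrite <- HEdef in Hd2.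
  assert (H20: sigma * gP (psi b beta mu 0) = 0).
  { rewrite psi_0. destruct HgP as [_ [HP0 _]]. rewrite HP0. ring. }
  destruct (rem_small gI (fun u => sigma * gP (psi b beta mu u)) gamma E (omega*d) HdI0 HI0 Hd2 H20 eps Heps)
    as [eta [Heta Hrem]].
  set (q := (1+k1)/2).
  apply (abstract_las _ _ (dev (Ystar A c omega h d Fs) (Pstar A c omega h d Fs)) V kw Mv (kw*eta) q);
    auto.
  - apply Rmult_lt_0_compat; auto.
  - unfold q; split; lra.
  - intros p. unfold Sstar. apply dist3_dev.
  - intros p Hp.
    set (x := dev (Ystar A c omega h d Fs) (Pstar A c omega h d Fs) p) in *.
    pose proof (model gI gP A c gamma omega h d sigma mu Fs b beta p E HD HEdef) as Hm.
    cbv zeta in Hm. fold x in Hm. rewrite Hm.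
    assert (Hnx: nrm x < eta).
    { pose proof (Vlow x). apply Rmult_lt_reg_l with kw; auto. lra. }
    pose proof (Hrem x Hnx) as HR.
    pose proof (Vsplit (Jf x) (Rm gI (fun u => sigma * gP (psi b beta mu u)) gamma E (omega*d) x) th Hth) as S.
    fold Jf.
    pose proof (Vdec x) as D1.
    pose proof (Vup (Rm gI (fun u => sigma * gP (psi b beta mu u)) gamma E (omega*d) x)) as U1.
    pose proof (Vlow x) as L1.
    pose proof (nrm_nonneg x) as N1.
    assert (T1: (1+th) * V (Jf x) <= k1 * V x).
    { unfold k1. apply Rmult_le_reg_l with (rho^2); [lra|].
      replace (rho^2 * ((1+th)/rho^2 * V x)) with ((1+th) * V x) by (field; lra). nra. }
    assert (T2: (1+/th) * V (Rm gI (fun u => sigma * gP (psi b beta mu u)) gamma E (omega*d) x)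
               <= (1+/th)*Mv*eps*nrm x).
    { rewrite !Rmult_assoc. apply Rmult_le_compat_l; [lra|].
      apply Rle_trans with (1 := U1). apply Rmult_le_compat_l; lra. }
    assert (T3: (1+/th)*Mv*eps*nrm x <= (1-k1)/2 * V x).
    { unfold eps. replace ((1 + / th) * Mv * ((1 - k1) * kw / (2 * (1 + / th) * Mv)) * nrm x)
        with ((1-k1)/2 * (kw * nrm x)) by (field; lra).
      apply Rmult_le_compat_l; lra. }
    change (J3 (c + gamma) (omega * h) (- gamma) (omega * d * E) (1 - E) x) with (Jf x). unfold q. lra.
Qed.
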